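(* Let $n,N\ge1$, $1\le b\le n$, and let $J\subseteq\mathbb{Z}_n$ with $|J|=g>0$. Let $\mathbf{c}=(b_{1,1},\dots,b_{n,1},b_{1,2},\dots,b_{n,2},\dots,b_{1,N},\dots,b_{n,N})\in\mathbb{F}_q^{nN}$ and let $\Delta(\mathbf{c})=(b_{i,j})$ be the associated $n\times N$ matrix. Suppose that for each $i\in J$ the $i$-th row of $\Delta(\mathbf{c})$ has exactly $\ell$ nonzero entries, and all other rows of $\Delta(\mathbf{c})$ are zero. Then $$w_b(\mathbf{c})\ge \ell\Big(g+\sum_{H\in\mathbb{H}(J),\,|H|\le b-1}|H|+\sum_{H\in\mathbb{H}(J),\,|H|\ge b}(b-1)\Big),$$ where $w_b(\mathbf{c})$ is the $b$-symbol weight of $\mathbf{c}$ as a vector of length $nN$.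
   Context: For a vector of length $L$, indices are in $\mathbb{Z}_L=\{1,\dots,L\}$ taken cyclically mod $L$. For $\mathbf{x}\in\mathbb{F}_q^L$, $\chi_b(\mathbf{x})=\{i\in\mathbb{Z}_L:(x_i,\dots,x_{i+b-1})\ne\mathbf{0}\}$ (indices mod $L$) and $w_b(\mathbf{x})=|\chi_b(\mathbf{x})|$. For $J\subseteq\mathbb{Z}_n$, a hole of $J$ of size $h\ge 1$ is a set $H=\{a+1,\dots,a+h\}\subseteq\mathbb{Z}_n\setminus J$ (indices mod $n$) with $a,a+h+1\in J$; $\mathbb{H}(J)$ is the set of all holes of $J$. The vector $\mathbf{c}\in\mathbb{F}_q^{nN}$ is identified with the $n\times N$ matrix $\Delta(\mathbf{c})$ whose $(i,j)$ entry $b_{i,j}$ is the coordinate of $\mathbf{c}$ in position $i+(j-1)n$. *)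

(* Defs.v *)
(* Indices are 0-based: Z_L = {0,...,L-1} taken mod L. *)
From mathcomp Require Import all_boot all_order all_algebra.
Set Implicit Arguments. Unset Strict Implicit. Unset Printing Implicit Defensive.
Import GRing.Theory.
Local Open Scope ring_scope.

(* coordinate of x at natural position m (0 if m is out of range; only used
   with m < L) *)
Definition coord_at (F : nzRingType) (L : nat) (x : 'rV[F]_L) (m : nat) : F :=
  if insub m is Some i then x ord0 i else 0.

Definition chi_b (F : nzRingType) (L b : nat) (x : 'rV[F]_L) : {set 'I_L} :=
  [set i : 'I_L | [exists k : 'I_b, coord_at x ((i + k) %% L)%N != 0]].

Definition w_b (F : nzRingType) (L b : nat) (x : 'rV[F]_L) : nat := #|chi_b b x|.

(* Delta(c): the n x N matrix with (i,j) entry the coordinate of c at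
   position i + j*n (0-based version of i + (j-1)n) *)
Definition Delta (F : nzRingType) (n N : nat) (c : 'rV[F]_(n * N)) : 'M[F]_(n, N) :=
  \matrix_(i < n, j < N) coord_at c (i + j * n)%N.

Definition inJ (n : nat) (J : {set 'I_n}) (m : nat) : bool :=
  [exists x in J, val x == (m %% n)%N].

(* H is a hole of J: H = {a+1,...,a+h} (mod n), h >= 1, disjoint from J,
   with a, a+h+1 in J.  (a and h range over 'I_n; a hole necessarily has
   h <= n-1, since a+n = a mod n lies in J.) *)
Definition is_hole (n : nat) (J : {set 'I_n}) (H : {set 'I_n}) : bool :=
  [exists a : 'I_n, exists h : 'I_n,
    [&& (0 < h)%N, a \in J, inJ J (a + h + 1)%N,
        [forall k : 'I_n, ((0 < k) && (k <= h))%N ==> ~~ inJ J (a + k)%N] &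
        H == [set x : 'I_n | [exists k : 'I_n,
                 [&& (0 < k)%N, (k <= h)%N & val x == ((a + k) %% n)%N]]]]].

Definition holes (n : nat) (J : {set 'I_n}) : {set {set 'I_n}} :=
  [set H | is_hole J H].

(* Main.v *)
Require Import Defs.
From mathcomp Require Import all_boot all_order all_algebra.
Import GRing.Theory.
Local Open Scope ring_scope.
From mathcomp Require Import zify.
Set Implicit Arguments. Unset Strict Implicit. Unset Printing Implicit Defensive.

Section Comb.
Local Open Scope nat_scope.

Definition Rset (n b : nat) (J : {set 'I_n}) : {set 'I_n} :=
  [set r : 'I_n | [exists k : 'I_b, inJ J (r + k)]].

Lemma inJ_mod n (J : {set 'I_n}) m1 m2 : m1 = m2 %[mod n] -> inJ J m1 = inJ J m2.
Proof. by rewrite /inJ => ->. Qed.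

Lemma inJ_val n (J : {set 'I_n}) (x : 'I_n) : x \in J -> inJ J x.
Proof. by move=> xJ; rewrite /inJ; apply/existsP; exists x; rewrite xJ modn_small ?eqxx ?ltn_ord. Qed.

Lemma holeP n (J : {set 'I_n}) H : is_hole J H ->
  exists (a : 'I_n) (h : nat), [/\ 0 < h < n, a \in J, inJ J (a + h + 1),
   forall d, 0 < d <= h -> ~~ inJ J (a + d)
 & forall x : 'I_n, x \in H <-> exists2 k, 0 < k <= h & val x = (a + k) %% n].
Proof.
case/existsP=> a /existsP [h /and5P [h0 aJ hJ /forallP hf /eqP ->]].
exists a, h; split => //; first by rewrite h0 ltn_ord.
- move=> d /andP[d0 dh]; have dn : d < n by apply: leq_ltn_trans dh (ltn_ord h).
  by have := hf (Ordinal dn); rewrite /= d0 dh.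
- move=> x; rewrite inE; split.
    by case/existsP=> k /and3P[k0 kh /eqP e]; exists k => //; rewrite k0.
  case=> k /andP[k0 kh] e; apply/existsP.
  have kn : k < n by apply: leq_ltn_trans kh (ltn_ord h).
  by exists (Ordinal kn); rewrite /= k0 kh e eqxx.
Qed.

Lemma hole_notJ n (J : {set 'I_n}) H x : is_hole J H -> x \in H -> x \notin J.
Proof.
case/holeP => a [h [_ _ _ hf hm]] /hm [k kr e].
apply/negP => xJ; have := hf k kr.
by rewrite (@inJ_mod _ _ _ (x)) ?inJ_val // e modn_mod.
Qed.

Lemma hole_k n (J : {set 'I_n}) (a1 a2 : 'I_n) h2 k1 k2 : a1 \in J ->
  (forall d, 0 < d <= h2 -> ~~ inJ J (a2 + d)) -> k2 <= h2 ->
  a1 + k1 = a2 + k2 %[mod n] -> k2 <= k1.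
Proof.
move=> aJ hf kh e; rewrite leqNgt; apply/negP => lt12.
have Hd : 0 < k2 - k1 <= h2.
  by rewrite subn_gt0 lt12 (leq_trans (leq_subr _ _) kh).
move: (hf _ Hd) => /negP; apply.
rewrite (@inJ_mod _ _ _ (a1)) ?inJ_val //.
apply/eqP; rewrite -(eqn_modDr k1) -addnA subnK ?(ltnW lt12) //.
by rewrite e.
Qed.

Lemma hole_h n (J : {set 'I_n}) (a : 'I_n) h1 h2 : inJ J (a + h1 + 1) ->
  (forall d, 0 < d <= h2 -> ~~ inJ J (a + d)) -> h2 <= h1.
Proof.
move=> hJ hf; rewrite leqNgt; apply/negP => lt.
have Hd : 0 < h1.+1 <= h2 by rewrite ltn0Sn.
move: (hf _ Hd) => /negP; apply.
by rewrite -addn1 addnA.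
Qed.

Lemma hole_disj n (J : {set 'I_n}) H1 H2 x : is_hole J H1 -> is_hole J H2 ->
  x \in H1 -> x \in H2 -> H1 = H2.
Proof.
case/holeP => a1 [h1 [_ a1J h1J hf1 hm1]].
case/holeP => a2 [h2 [_ a2J h2J hf2 hm2]].
move=> /hm1 [k1 /andP[_ k1h] e1] /hm2 [k2 /andP[_ k2h] e2].
have e : a1 + k1 = a2 + k2 %[mod n] by rewrite -e1 -e2.
have le1 := hole_k a1J hf2 k2h e.
have le2 := hole_k a2J hf1 k1h (esym e).
have ek : k1 = k2 by apply/eqP; rewrite eqn_leq le1 le2.
rewrite ek in e.
have ea : a1 = a2.
  apply: val_inj; move/eqP: e; rewrite eqn_modDr !modn_small //.
  by move/eqP.
rewrite -ea in hf2 h2J.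
have eh : h1 = h2.
  by apply/eqP; rewrite eqn_leq (hole_h h2J hf1) (hole_h h1J hf2).
apply/setP => y; apply/idP/idP.
  by move/hm1 => [k kr ey]; apply/hm2; exists k; rewrite -?eh -?ea.
by move/hm2 => [k kr ey]; apply/hm1; exists k; rewrite ?eh ?ea.
Qed.

Lemma hole_minR n b (J : {set 'I_n}) H : is_hole J H -> 0 < b ->
  minn #|H| (b - 1) <= #|H :&: Rset b J|.
Proof.
case/holeP => a [h [/andP[h0 hn] aJ hJ hf hm]] b0.
have n0 : 0 < n by apply: leq_ltn_trans (leq0n a) (ltn_ord a).
have cardH : #|H| <= h.
  pose f := fun k : 'I_h => Ordinal (ltn_pmod (a + k.+1) n0).
  apply: leq_trans (_ : #|[set f k | k in 'I_h]| <= h).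
    apply subset_leq_card; apply/subsetP => x /hm [k /andP[k0 kh] e].
    have kh' : k.-1 < h by rewrite prednK.
    apply/imsetP; exists (Ordinal kh') => //; apply: val_inj.
    by rewrite /= prednK.
  by rewrite (leq_trans (leq_imset_card _ _)) // card_ord.
set m := minn h (b - 1).
have mh : m <= h by apply: geq_minl.
have mb : m <= b - 1 by apply: geq_minr.
pose g := fun i : 'I_m => Ordinal (ltn_pmod (a + (h - i)) n0).
have ginj : injective g.
  move=> i j /(congr1 val) /= /eqP.
  have hi : h - i < n by apply: leq_ltn_trans (leq_subr _ _) hn.
  have hj : h - j < n by apply: leq_ltn_trans (leq_subr _ _) hn.
  rewrite eqn_modDl !modn_small // => /eqP.
  have := ltn_ord i; have := ltn_ord j => ??.
  move=> E; apply: val_inj => /=; lia.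
apply: leq_trans (_ : m <= _).
  rewrite leq_min geq_minr andbT; exact: leq_trans (geq_minl _ _) cardH.
rewrite -{1}(card_ord m) -(card_imset _ ginj).
apply subset_leq_card; apply/subsetP => x /imsetP [i _ ->].
have im := ltn_ord i.
rewrite inE; apply/andP; split.
  apply/hm; exists (h - i) => //; rewrite subn_gt0 leq_subr andbT; lia.
rewrite inE; apply/existsP.
have ib : i.+1 < b by lia.
exists (Ordinal ib) => /=.
rewrite (@inJ_mod _ _ _ (a + h + 1)) //.
rewrite modnDml; congr (_ %% _); lia.
Qed.

Lemma R_bound n b (J : {set 'I_n}) : 0 < b ->
  #|J| + \sum_(H in holes J) minn #|H| (b - 1) <= #|Rset b J|.
Proof.
move=> b0.
have JR : J \subset Rset b J.
  apply/subsetP => x xJ; rewrite inE; apply/existsP; exists (Ordinal b0).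
  by rewrite /= addn0 inJ_val.
rewrite -(cardsID J (Rset b J)) (setIidPr JR) leq_add2l.
apply: leq_trans (_ : \sum_(H in holes J) #|H :&: Rset b J| <= _).
  by apply: leq_sum => H; rewrite inE => Hh; apply: hole_minR.
have E : forall H : {set 'I_n}, #|H :&: Rset b J| =
    \sum_(x in Rset b J) (if x \in H then 1 else 0).
  move=> H; rewrite -big_mkcondr -sum1_card; apply: eq_bigl => x.
  by rewrite !inE andbC.
have E2 : #|Rset b J :\: J| =
    \sum_(x in Rset b J) (if x \notin J then 1 else 0).
  rewrite -big_mkcondr -sum1_card; apply: eq_bigl => x.
  by rewrite !inE andbC.
under eq_bigr => H _ do rewrite E.
rewrite exchange_big /= E2.
apply: leq_sum => x _.
case: (boolP [exists H in holes J, x \in H]).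
  case/exists_inP => H0 H0h xH0.
  rewrite (bigD1 H0) //= xH0.
  move: (H0h); rewrite inE => H0h'.
  rewrite big1 ?(hole_notJ H0h' xH0) // => H /andP[Hh HH0].
  case: ifP => // xH; move: Hh; rewrite inE => Hh.
  by rewrite (hole_disj Hh H0h' xH xH0) eqxx in HH0.
move/exists_inPn => hn; rewrite big1 // => H Hh.
by rewrite (negbTE (hn H Hh)).
Qed.
End Comb.

Section W.
Local Open Scope nat_scope.

Lemma wb_bound (F : finFieldType) n N b (J : {set 'I_n}) (c : 'rV[F]_(n * N)) l :
  0 < n -> 0 < N -> 0 < b <= n ->
  (forall i : 'I_n, i \in J -> #|[set j : 'I_N | (Delta c i j != 0)%R]| = l) ->
  l * #|Rset b J| <= w_b b c.
Proof.
move=> n0 N0 /andP[b0 bn] hl.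
have L0 : 0 < n * N by rewrite muln_gt0 n0.
rewrite /w_b -[#|chi_b b c|]sum1_card.
pose row := fun p : 'I_(n * N) => Ordinal (ltn_pmod p n0).
rewrite (partition_big row predT) //=.
rewrite (bigID (fun r => r \in Rset b J)) /=.
apply: leq_trans (leq_addr _ _).
rewrite mulnC -sum_nat_const.
apply: leq_sum => r.
rewrite inE => /existsP [k /existsP [e /andP [eJ /eqP ee]]].
rewrite sum1dep_card -(hl e eJ).
pose f := fun j : 'I_N => Ordinal (ltn_pmod (e + j * n + (n * N - k)) L0).
have ejL : forall j : 'I_N, e + j * n < n * N.
  move=> j; have := ltn_ord e; have := ltn_ord j; nia.
have kL : k <= n * N.
  have := ltn_ord k; rewrite -[n]muln1 in bn *; nia.
have jL : forall j : 'I_N, j * n < n * N.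
  by move=> j; rewrite mulnC ltn_pmul2l.
have finj : injective f.
  move=> i j /(congr1 val) /= /eqP.
  rewrite eqn_modDr eqn_modDl !modn_small ?jL //.
  move=> /eqP E; apply: val_inj => /=.
  have : i * n = j * n by lia.
  by move/eqP; rewrite eqn_pmul2r // => /eqP.
rewrite -(card_imset _ finj).
apply subset_leq_card; apply/subsetP => x /imsetP [j jS ->].
rewrite !inE; apply/andP; split.
  apply/existsP; exists k.
  have -> : (f j + k) %% (n * N) = e + j * n.
    rewrite /= modnDml -addnA subnK // modnDr modn_small //.
  by move: jS; rewrite inE mxE.
apply/eqP; apply: val_inj => /=.
rewrite modn_dvdm ?dvdn_mulr // -(modn_small (ltn_ord r)).
apply/eqP; rewrite -(eqn_modDr k) -ee -addnA subnK // -addnA (mulnC n N) -mulnDl.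
by rewrite addnC modnMDl modn_small // ltn_ord.
Qed.
End W.

Unset Implicit Arguments. Set Strict Implicit.
Theorem mainTheorem2 (F : finFieldType) (n N b : nat) (J : {set 'I_n})
    (g l : nat) (c : 'rV[F]_(n * N)) :
  (1 <= n)%N -> (1 <= N)%N -> (1 <= b <= n)%N ->
  #|J| = g -> (0 < g)%N ->
  (forall i : 'I_n, i \in J -> #|[set j : 'I_N | Delta c i j != 0]| = l) ->
  (forall i : 'I_n, i \notin J -> forall j : 'I_N, Delta c i j = 0) ->
  (l * (g + \sum_(H in holes J | #|H| <= b - 1) #|H|
          + \sum_(H in holes J | b <= #|H|) (b - 1)) <= w_b b c)%N.
Proof.
move=> n1 N1 bb gJ g0 hl _.
have b0 : (0 < b)%N by case/andP: bb.
apply: leq_trans (wb_bound n1 N1 bb hl).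
apply: leq_mul => //.
rewrite -gJ -addnA; apply: leq_trans (R_bound J b0); rewrite leq_add2l.
rewrite [X in (_ <= X)%N](bigID (fun H : {set 'I_n} => (#|H| <= b - 1)%N)) /=.
apply: leq_add.
  by apply: leq_sum => H /andP[_ h]; rewrite (minn_idPl h).
rewrite (eq_bigl (fun H => (H \in holes J) && ~~ (#|H| <= b - 1)%N)); last first.
  by move=> H; congr (_ && _); rewrite -ltnNge subn1 prednK.
apply: leq_sum => H /andP[_ h]; rewrite -ltnNge in h; by rewrite (minn_idPr (ltnW h)).
Qed.
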